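(* Let $a>1/e$ be a real number. Then, as $t\to+\infty$, $$f(t,a)\sim\left(\frac{2\pi t}{ea}\right)^{1/2}\exp\frac{t}{ea},$$ where $f(t,a)=t\int_{0}^{1}(ax)^{-tx}\,dx$.
   Context: For real $a>0$ and real $t$, $f(t,a)=t\int_0^1 (ax)^{-tx}\,dx$, where $(ax)^{-tx}=\exp(-tx\ln(ax))$ for $x\in(0,1]$ (value $1$ at $x=0$). The notation $g\sim h$ means $g/h\to 1$. *)

(* Defs.v *)
From Stdlib Require Import Reals.
From Coquelicot Require Import Coquelicot.
Open Scope R_scope.

(* (a x)^(-t x) = exp(-t x ln(a x)) for x in (0,1]; at x = 0 the exponent
   is -t*0*ln(0) = 0, so the value is 1, matching the paper's convention. *)
Definition integrand (t a x : R) : R := exp (- (t * x * ln (a * x))).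

Definition f_ta (t a : R) : R := t * RInt (fun x => integrand t a x) 0 1.

Definition g_ta (t a : R) : R :=
  sqrt (2 * PI * t / (exp 1 * a)) * exp (t / (exp 1 * a)).

(* Main.v *)
Require Import Defs.
From Stdlib Require Import Reals Lra Psatz.
From Coquelicot Require Import Coquelicot.
Open Scope R_scope.


Lemma RInt_correct_R (f:R->R) a b : ex_RInt f a b -> is_RInt f a b (RInt f a b).
Proof. intro H. exact (RInt_correct (V:=R_CompleteNormedModule) f a b H). Qed.

Ltac fixeq := match goal with |- ?a = ?b => change (@eq R a b) end.

Lemma RInt_scal_R (f:R->R) a b l : ex_RInt f a b -> RInt (fun x => l * f x) a b = l * RInt f a b :> R.
Proof. intros H. exact (RInt_scal (V:=R_CompleteNormedModule) f a b l H). Qed.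
Lemma RInt_comp_lin_R (f:R->R) u v a b : ex_RInt f (u*a+v) (u*b+v) ->
  RInt (fun y => u * f (u*y+v)) a b = RInt f (u*a+v) (u*b+v) :> R.
Proof. intros H. exact (RInt_comp_lin (V:=R_CompleteNormedModule) f u v a b H). Qed.
Lemma RInt_Chasles_R (f:R->R) a b c : ex_RInt f a b -> ex_RInt f b c -> RInt f a b + RInt f b c = RInt f a c :> R.
Proof. intros H1 H2. exact (RInt_Chasles (V:=R_CompleteNormedModule) f a b c H1 H2). Qed.
Lemma RInt_swap_R (f:R->R) a b : ex_RInt f a b -> - RInt f a b = RInt f b a :> R.
Proof. intros H. exact (opp_RInt_swap (V:=R_CompleteNormedModule) f a b H). Qed.
Lemma ex_RInt_cont_R (f:R->R) a b : (forall z, Rmin a b <= z <= Rmax a b -> continuous f z) -> ex_RInt f a b.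
Proof. intros H. exact (ex_RInt_continuous (V:=R_CompleteNormedModule) f a b H). Qed.
Lemma cont_der_R (f:R->R) x : ex_derive f x -> continuous f x.
Proof. intros H. exact (ex_derive_continuous (K:=R_AbsRing) (V:=R_NormedModule) f x H). Qed.
Lemma RInt_const_R a b c : RInt (fun _ => c) a b = (b-a)*c :> R.
Proof. exact (RInt_const (V:=R_CompleteNormedModule) a b c). Qed.

Lemma RInt_ext_R (f g:R->R) a b : (forall x, Rmin a b < x < Rmax a b -> f x = g x) -> RInt f a b = RInt g a b :> R.
Proof. intros H. exact (RInt_ext (V:=R_CompleteNormedModule) f g a b H). Qed.

Lemma exp_le x y : x <= y -> exp x <= exp y.
Proof. intros [H|H]. apply Rlt_le, exp_increasing, H. subst; lra. Qed.

Definition gf (w:R) := exp (-(w*w)).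
Definition G (x:R) := RInt gf 0 x.

Lemma gf_cont x : continuous gf x.
Proof. apply (ex_derive_continuous (K:=R_AbsRing) (V:=R_NormedModule)). unfold gf. auto_derive. auto. Qed.

Lemma gf_ex a b : ex_RInt gf a b.
Proof. apply (ex_RInt_continuous (V:=R_CompleteNormedModule)). intros; apply gf_cont. Qed.

Lemma G_deriv x : is_derive G x (gf x).
Proof.
  apply (is_derive_RInt gf G 0 x).
  - apply filter_forall. intros y. apply RInt_correct_R, gf_ex.
  - apply gf_cont.
Qed.

Definition ff (x s : R) := exp (-(x*x)*(1+s*s)) / (1+s*s).
Definition F (x:R) := RInt (fun s => ff x s) 0 1.

Lemma ff_deriv u s : is_derive (fun z => ff z s) u (-2*u*exp(-(u*u)*(1+s*s))).
Proof.
  unfold ff. auto_derive.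
  - nra.
  - field. nra.
Qed.

Lemma ff_ex x a b : ex_RInt (fun s => ff x s) a b.
Proof. apply (ex_RInt_continuous (V:=R_CompleteNormedModule)). intros; apply (ex_derive_continuous (K:=R_AbsRing) (V:=R_NormedModule)). unfold ff. auto_derive. nra. Qed.

Lemma cont_exp_pt y : continuity_pt exp y.
Proof. apply derivable_continuous_pt, derivable_pt_exp. Qed.

Lemma F_deriv x : is_derive F x (-2 * exp(-(x*x)) * G x).
Proof.
  assert (H := is_derive_RInt_param ff 0 1 x).
  unfold F.
  replace (-2 * exp(-(x*x)) * G x) with (RInt (fun t => Derive (fun u => ff u t) x) 0 1).
  apply H.
  - apply filter_forall. intros y t _. eexists. apply ff_deriv.
  - intros t _. apply continuity_2d_pt_ext with (fun u v => -2*u*exp(-(u*u)*(1+v*v))).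
    + intros u v. symmetry. apply is_derive_unique, ff_deriv.
    + apply continuity_2d_pt_mult.
      apply continuity_2d_pt_mult. apply continuity_2d_pt_const. apply continuity_2d_pt_id1.
      apply continuity_1d_2d_pt_comp with (f := exp) (g := fun u v => -(u*u)*(1+v*v)).
      apply cont_exp_pt.
      apply continuity_2d_pt_mult. apply continuity_2d_pt_opp.
      apply continuity_2d_pt_mult; apply continuity_2d_pt_id1.
      apply continuity_2d_pt_plus. apply continuity_2d_pt_const.
      apply continuity_2d_pt_mult; apply continuity_2d_pt_id2.
  - apply filter_forall. intros y. apply ff_ex.
  - rewrite (RInt_ext_R _ (fun t => scal (-2 * exp(-(x*x))) (scal x (gf (x*t+0))))).
    + rewrite (RInt_scal (V:=R_CompleteNormedModule)).
      rewrite (RInt_comp_lin (V:=R_CompleteNormedModule)). unfold G.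
      rewrite Rmult_0_r, Rplus_0_r, Rmult_1_r, Rplus_0_r. reflexivity.
      apply gf_ex.
      apply (ex_RInt_continuous (V:=R_CompleteNormedModule)). intros z _.
      apply (ex_derive_continuous (K:=R_AbsRing) (V:=R_NormedModule)).
      unfold gf, scal; simpl; unfold mult; simpl. auto_derive. auto.
    + intros t _. transitivity (-2*x*exp(-(x*x)*(1+t*t))).
      apply is_derive_unique, ff_deriv.
      unfold scal; simpl; unfold mult; simpl. unfold gf.
      replace (-(x*x)*(1+t*t)) with (-(x*x) + -((x*t+0)*(x*t+0))) by ring.
      rewrite exp_plus. ring.
Qed.

Lemma H_deriv x : is_derive (fun y => G y * G y + F y) x 0.
Proof.
  replace 0 with (gf x * G x + G x * gf x + (-2 * exp(-(x*x)) * G x)).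
  apply (is_derive_plus (K:=R_AbsRing) (V:=R_NormedModule)).
  apply (is_derive_mult (K:=R_AbsRing)). apply G_deriv. apply G_deriv.
  intros; unfold mult; simpl; ring.
  apply F_deriv.
  unfold gf. ring.
Qed.

Lemma H_const x : G x * G x + F x = G 0 * G 0 + F 0.
Proof.
  destruct (Rtotal_order x 0) as [Hx|[Hx|Hx]].
  - destruct (MVT_cor2 (fun y => G y * G y + F y) (fun _ => 0) x 0 Hx) as [c [Hc _]].
    intros; apply is_derive_Reals, H_deriv. lra.
  - subst; reflexivity.
  - destruct (MVT_cor2 (fun y => G y * G y + F y) (fun _ => 0) 0 x Hx) as [c [Hc _]].
    intros; apply is_derive_Reals, H_deriv. lra.
Qed.

Lemma G0 : G 0 = 0.
Proof. unfold G. apply (RInt_point (V:=R_CompleteNormedModule)). Qed.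

Lemma F0 : F 0 = PI/4.
Proof.
  unfold F. rewrite (RInt_ext_R _ (fun s => / (1 + s^2))).
  - rewrite (is_RInt_unique (V:=R_CompleteNormedModule) _ 0 1 (atan 1 - atan 0)).
    rewrite atan_1, atan_0. unfold Rminus; rewrite Ropp_0, Rplus_0_r; reflexivity.
    apply (is_RInt_derive (V:=R_CompleteNormedModule) atan).
    + intros; apply is_derive_Reals, derivable_pt_lim_atan.
    + intros; apply (ex_derive_continuous (K:=R_AbsRing) (V:=R_NormedModule)).
      auto_derive. nra.
  - intros s _. unfold ff. replace (-(0*0)*(1+s*s)) with 0 by ring. rewrite exp_0. simpl. field. nra.
Qed.

Lemma H_val x : G x * G x + F x = PI/4.
Proof. rewrite H_const, G0, F0. ring. Qed.

Lemma F_bounds x : 0 <= F x <= exp(-(x*x)).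
Proof.
  unfold F; split.
  - apply RInt_ge_0. lra. apply ff_ex. intros s _. unfold ff.
    apply Rlt_le, Rdiv_lt_0_compat. apply exp_pos. nra.
  - replace (exp(-(x*x))) with (RInt (fun _ => exp(-(x*x))) 0 1).
    apply RInt_le. lra. apply ff_ex. apply (ex_RInt_const (V:=R_NormedModule)).
    intros s _. unfold ff.
    assert (exp (-(x*x)*(1+s*s)) <= exp(-(x*x))).
    { apply exp_le. nra. }
    apply Rle_trans with (exp (-(x*x)*(1+s*s))).
    unfold Rdiv. rewrite <- (Rmult_1_r (exp (-(x*x)*(1+s*s)))) at 2.
    apply Rmult_le_compat_l. apply Rlt_le, exp_pos.
    rewrite <- Rinv_1. apply Rinv_le_contravar; nra. auto.
    rewrite (RInt_const (V:=R_CompleteNormedModule)). unfold scal; simpl; unfold mult; simpl. ring.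
Qed.

Lemma lim_lin_p C : 0 < C -> is_lim (fun t => C*t) p_infty p_infty.
Proof.
  intros HC. apply is_lim_spec. intros M. exists (M/C). intros x Hx.
  apply Rmult_lt_compat_l with (r:=C) in Hx; auto.
  unfold Rdiv in Hx. rewrite <- Rmult_assoc, (Rmult_comm C M), Rmult_assoc, Rinv_r in Hx; lra.
Qed.

Lemma lim_expmsq : is_lim (fun x => exp(-(x*x))) p_infty 0.
Proof.
  apply is_lim_comp with (l := m_infty).
  - apply is_lim_exp_m.
  - apply is_lim_le_m_loc with (fun x => - x).
    + exists 1. intros x Hx. nra.
    + apply (is_lim_opp (fun x => x) p_infty p_infty). apply is_lim_id.
  - exists 0. intros x _. discriminate.
Qed.

Lemma G_ge0 x : 0 <= x -> 0 <= G x.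
Proof. intros. apply RInt_ge_0; auto. apply gf_ex. intros; apply Rlt_le, exp_pos. Qed.

Lemma lim_G : is_lim G p_infty (sqrt PI / 2).
Proof.
  assert (Hsq : is_lim (fun x => G x * G x) p_infty (PI/4)).
  { apply is_lim_le_le_loc with (fun x => PI/4 - exp(-(x*x))) (fun x => PI/4).
    - exists 0. intros x _. pose proof (H_val x). pose proof (F_bounds x). lra.
    - apply (is_lim_plus (fun _ => PI/4) (fun x => - exp(-(x*x))) p_infty (PI/4) 0).
      apply is_lim_const.
      replace (Finite 0) with (Rbar_opp 0). apply is_lim_opp. apply lim_expmsq.
      simpl. f_equal. ring.
      unfold is_Rbar_plus; simpl. f_equal. f_equal. ring.
    - apply is_lim_const. }
  assert (Hs : is_lim (fun x => sqrt (G x * G x)) p_infty (sqrt (PI/4))).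
  { apply is_lim_comp_continuous with (g := sqrt). apply Hsq.
    apply (ex_derive_continuous (K:=R_AbsRing) (V:=R_NormedModule)). auto_derive.
    pose proof PI_RGT_0. lra. }
  replace (sqrt PI / 2) with (sqrt (PI/4)).
  apply is_lim_ext_loc with (fun x => sqrt (G x * G x)).
  exists 0. intros x Hx. apply sqrt_square, G_ge0. lra. auto.
  rewrite sqrt_div_alt. replace 4 with (2*2) by ring. rewrite sqrt_square. reflexivity. lra. lra.
Qed.

Lemma G_odd x : G (-x) = - G x.
Proof.
  unfold G.
  assert (E := RInt_comp_lin_R gf (-1) 0 0 x (gf_ex _ _)).
  replace (-1*0+0) with 0 in E by ring. replace (-1*x+0) with (-x) in E by ring.
  rewrite <- E.
  rewrite (RInt_ext_R _ (fun y => -1 * gf y)).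
  rewrite RInt_scal_R. fixeq. ring. apply gf_ex.
  intros y _. unfold gf. f_equal. f_equal. f_equal. ring.
Qed.

Lemma Gs_eq A : RInt gf (-A) A = 2 * G A :> R.
Proof.
  rewrite <- (RInt_Chasles_R gf (-A) 0 A) by apply gf_ex.
  rewrite <- (RInt_swap_R gf 0 (-A)) by apply gf_ex.
  fold (G (-A)). fold (G A). rewrite G_odd. ring.
Qed.

Lemma lim_J k d c : 0 < k -> 0 < d ->
  is_lim (fun t => sqrt t * RInt (fun x => exp(-(t*k*(x-c)^2/2))) (c-d) (c+d)) p_infty (sqrt (2*PI/k)).
Proof.
  intros Hk Hd.
  set (C := d * sqrt (k/2)).
  assert (HC : 0 < C). { unfold C. apply Rmult_lt_0_compat; auto. apply sqrt_lt_R0. lra. }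
  apply is_lim_ext_loc with (fun t => sqrt (2/k) * (2 * G (C * sqrt t))).
  - exists 0. intros t Ht.
    set (s := sqrt (t*k/2)).
    assert (Hs : 0 < s). { unfold s. apply sqrt_lt_R0. nra. }
    assert (Hs2 : s * s = t*k/2). { unfold s. apply sqrt_sqrt. nra. }
    assert (E := RInt_comp_lin_R (fun x => exp(-(t*k*(x-c)^2/2))) (/s) c (-(s*d)) (s*d)).
    replace (/s * -(s*d) + c) with (c-d) in E by (field; lra).
    replace (/s * (s*d) + c) with (c+d) in E by (field; lra).
    rewrite <- E.
    2:{ apply ex_RInt_cont_R. intros; apply cont_der_R. auto_derive. auto. }
    rewrite (RInt_ext_R _ (fun y => /s * gf y)).
    rewrite RInt_scal_R, Gs_eq. 2: apply gf_ex.
    replace (s*d) with (C * sqrt t).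
    assert (sqrt t / s = sqrt (2/k)).
    { unfold s. rewrite <- sqrt_div_alt by nra. f_equal. field. split; lra. }
    rewrite <- H. field. lra.
    unfold C, s. replace (t*k/2) with (t * (k/2)) by field. rewrite sqrt_mult_alt by lra. ring.
    intros y _. unfold gf. f_equal. f_equal. 
    replace ((/s*y+c-c)^2) with (y*y/(s*s)) by (field; lra). rewrite Hs2. field. split; lra.
  - replace (sqrt (2*PI/k)) with (sqrt (2/k) * (2 * (sqrt PI / 2))).
    apply (is_lim_scal_l _ (sqrt (2/k)) p_infty (2 * (sqrt PI / 2))).
    apply (is_lim_scal_l _ 2 p_infty (sqrt PI / 2)).
    apply is_lim_comp with (l := p_infty). apply lim_G.
    apply is_lim_le_p_loc with (fun t => C * sqrt t). exists 0; intros; lra.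
    apply is_lim_comp with (l := p_infty). apply lim_lin_p, HC.
    apply is_lim_sqrt_p, is_lim_id. exists 0. intros; discriminate.
    exists 0. intros; discriminate.
    replace (2*PI/k) with (2/k*PI) by (field; lra).
    rewrite sqrt_mult_alt. field. apply Rlt_le, Rdiv_lt_0_compat; lra.
Qed.



Lemma taylor_lb (F F1 F2 : R -> R) lo hi c x k :
  (forall s, lo <= s <= hi -> is_derive F s (F1 s) /\ is_derive F1 s (F2 s)) ->
  lo <= c <= hi -> lo <= x <= hi ->
  F c = 0 -> F1 c = 0 -> (forall s, lo <= s <= hi -> k <= F2 s) ->
  k*(x-c)^2/2 <= F x.
Proof.
  intros HD Hc Hx F0 F10 Hk.
  set (q := fun s => F s - k*(s-c)^2/2).
  set (q1 := fun s => F1 s - k*(s-c)).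
  set (q2 := fun s => F2 s - k).
  assert (Dq : forall s, lo <= s <= hi -> derivable_pt_lim q s (q1 s)).
  { intros s Hs. apply is_derive_Reals. unfold q, q1.
    apply (is_derive_minus (K:=R_AbsRing) (V:=R_NormedModule)). apply HD; auto.
    assert (E : is_derive (fun s => k*(s-c)^2/2) s (k*(s-c))) by (auto_derive; [auto| fixeq; field]).
    apply E. }
  assert (Dq1 : forall s, lo <= s <= hi -> derivable_pt_lim q1 s (q2 s)).
  { intros s Hs. apply is_derive_Reals. unfold q1, q2.
    apply (is_derive_minus (K:=R_AbsRing) (V:=R_NormedModule)). apply HD; auto.
    assert (E : is_derive (fun s => k*(s-c)) s k) by (auto_derive; [auto| fixeq; ring]).
    apply E. }
  assert (q0 : q c = 0) by (unfold q; cbv beta; rewrite F0; field).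
  assert (q10 : q1 c = 0) by (unfold q1; cbv beta; rewrite F10; fixeq; ring).
  assert (Q2 : forall s, lo <= s <= hi -> 0 <= q2 s) by (intros s Hs; unfold q2; specialize (Hk s Hs); lra).
  enough (0 <= q x) by (unfold q in H; lra).
  destruct (Rtotal_order c x) as [H|[H|H]].
  - destruct (MVT_cor2 q q1 c x H) as [xi [E1 Hxi]].
    { intros; apply Dq; lra. }
    destruct (MVT_cor2 q1 q2 c xi (proj1 Hxi)) as [eta [E2 Heta]].
    { intros; apply Dq1; lra. }
    assert (0 <= q2 eta) by (apply Q2; lra).
    assert (0 <= q1 xi) by (rewrite q10 in E2; nra).
    rewrite q0 in E1. nra.
  - subst. lra.
  - destruct (MVT_cor2 q q1 x c H) as [xi [E1 Hxi]].
    { intros; apply Dq; lra. }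
    destruct (MVT_cor2 q1 q2 xi c (proj2 Hxi)) as [eta [E2 Heta]].
    { intros; apply Dq1; lra. }
    assert (0 <= q2 eta) by (apply Q2; lra).
    assert (q1 xi <= 0) by (rewrite q10 in E2; nra).
    rewrite q0 in E1. nra.
Qed.

Lemma taylor_ub (F F1 F2 : R -> R) lo hi c x k :
  (forall s, lo <= s <= hi -> is_derive F s (F1 s) /\ is_derive F1 s (F2 s)) ->
  lo <= c <= hi -> lo <= x <= hi ->
  F c = 0 -> F1 c = 0 -> (forall s, lo <= s <= hi -> F2 s <= k) ->
  F x <= k*(x-c)^2/2.
Proof.
  intros HD Hc Hx F0 F10 Hk.
  assert (-k*(x-c)^2/2 <= (fun s => - F s) x).
  { apply (taylor_lb (fun s => - F s) (fun s => - F1 s) (fun s => - F2 s) lo hi c x (-k)); auto.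
    - intros s Hs. destruct (HD s Hs) as [A B]. split.
      apply is_derive_Reals, derivable_pt_lim_opp, is_derive_Reals, A.
      apply is_derive_Reals, derivable_pt_lim_opp, is_derive_Reals, B.
    - rewrite F0; ring.
    - rewrite F10; ring.
    - intros s Hs. specialize (Hk s Hs). lra. }
  simpl in H. lra.
Qed.


Lemma ln_nonpos x : x <= 0 -> ln x = 0.
Proof. intros H. unfold ln. destruct (Rlt_dec 0 x) as [h|h]. exfalso; lra. reflexivity. Qed.

Lemma xln_cont0 a : 0 < a -> continuity_pt (fun x => x * ln (a*x)) 0.
Proof.
  intros Ha.
  unfold continuity_pt, continue_in, limit1_in, limit_in. simpl. unfold R_dist.
  intros eps Heps.
  assert (Hl := is_lim_div_ln_p). apply is_lim_spec in Hl.
  destruct (Hl (mkposreal (eps*a) ltac:(nra))) as [M HM]. simpl in HM.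
  set (M1 := Rmax M 1).
  assert (HM1 : 1 <= M1) by apply Rmax_r.
  exists (/(a*M1)). split. apply Rinv_0_lt_compat. nra.
  intros x [_ Hx]. rewrite Rmult_0_l, Rminus_0_r. rewrite Rminus_0_r in Hx.
  destruct (Rle_or_lt x 0) as [Hx0|Hx0].
  - rewrite ln_nonpos by nra. rewrite Rmult_0_r, Rabs_R0. lra.
  - rewrite Rabs_pos_eq in Hx by lra.
    set (y := /(a*x)).
    assert (Hy : M1 < y).
    { unfold y. replace M1 with (/(a * /(a*M1))) at 1 by (field; split; lra).
      assert (0 < /(a*M1)) by (apply Rinv_0_lt_compat; nra).
      apply Rinv_lt_contravar. apply Rmult_lt_0_compat; nra. nra. }
    assert (HyM : M < y) by (pose proof (Rmax_l M 1); fold M1 in H; lra).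
    specialize (HM y HyM).
    assert (E : x * ln (a*x) = - (/a) * (ln y / y)).
    { unfold y. rewrite ln_Rinv by nra. field. split; lra. }
    rewrite E, Rabs_mult, Rabs_Ropp, Rabs_pos_eq by (left; apply Rinv_0_lt_compat; lra).
    rewrite Rminus_0_r in HM.
    apply Rmult_lt_compat_l with (r := /a) in HM. 2: apply Rinv_0_lt_compat; lra.
    replace (/a * (eps*a)) with eps in HM by (field; lra). lra.
Qed.


Definition cc a := /(exp 1 * a).
Definition psi a x := x * ln (a*x) + cc a.
Definition ig t a x := exp (-(t * psi a x)).

Lemma e_pos : 0 < exp 1. Proof. apply exp_pos. Qed.

Lemma a_pos a : /exp 1 < a -> 0 < a.
Proof. intros H. pose proof (Rinv_0_lt_compat _ e_pos). lra. Qed.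

Lemma cc_bounds a : /exp 1 < a -> 0 < cc a < 1.
Proof.
  intros H. pose proof e_pos. pose proof (a_pos a H).
  assert (1 < exp 1 * a).
  { apply Rmult_lt_compat_l with (r := exp 1) in H; auto. rewrite Rinv_r in H; lra. }
  unfold cc. split. apply Rinv_0_lt_compat; lra.
  assert (/(exp 1 * a) * (exp 1 * a) = 1) by (field; split; lra). assert (0 < /(exp 1 * a)) by (apply Rinv_0_lt_compat; lra). nra.
Qed.

Lemma ln_acc a : 0 < a -> ln (a * cc a) + 1 = 0.
Proof.
  intros Ha. pose proof e_pos. unfold cc.
  replace (a * /(exp 1 * a)) with (/ exp 1) by (field; split; lra).
  rewrite ln_Rinv, ln_exp by auto. ring.
Qed.

Lemma psi_c a : 0 < a -> psi a (cc a) = 0.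
Proof.
  intros Ha. unfold psi. pose proof (ln_acc a Ha).
  replace (ln (a * cc a)) with (-1) by lra. ring.
Qed.

Lemma psi_derivs a s : 0 < a -> 0 < s ->
  is_derive (psi a) s (ln (a*s) + 1) /\ is_derive (fun s => ln (a*s) + 1) s (/s).
Proof.
  intros Ha Hs. split.
  - unfold psi. auto_derive. nra. fixeq. field. lra.
  - auto_derive. nra. fixeq. field. lra.
Qed.

Lemma psi_lb1 a d x : /exp 1 < a -> 0 < d < cc a -> cc a - d <= x <= cc a + d ->
  /(cc a + d) * (x - cc a)^2/2 <= psi a x.
Proof.
  intros Ha Hd Hx. pose proof (a_pos a Ha).
  apply (taylor_lb (psi a) (fun s => ln (a*s) + 1) (fun s => /s) (cc a - d) (cc a + d)); auto.
  - intros s Hs. apply psi_derivs; lra.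
  - lra.
  - apply psi_c; auto.
  - apply ln_acc; auto.
  - intros s Hs. apply Rinv_le_contravar; lra.
Qed.

Lemma psi_ub1 a d x : /exp 1 < a -> 0 < d < cc a -> cc a - d <= x <= cc a + d ->
  psi a x <= /(cc a - d) * (x - cc a)^2/2.
Proof.
  intros Ha Hd Hx. pose proof (a_pos a Ha).
  apply (taylor_ub (psi a) (fun s => ln (a*s) + 1) (fun s => /s) (cc a - d) (cc a + d)); auto.
  - intros s Hs. apply psi_derivs; lra.
  - lra.
  - apply psi_c; auto.
  - apply ln_acc; auto.
  - intros s Hs. apply Rinv_le_contravar; lra.
Qed.

Lemma psi_lb2 a x : /exp 1 < a -> 0 < x <= 1 -> 1 * (x - cc a)^2/2 <= psi a x.
Proof.
  intros Ha Hx. pose proof (a_pos a Ha). pose proof (cc_bounds a Ha).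
  assert (0 < Rmin x (cc a)) by (apply Rmin_glb_lt; lra).
  pose proof (Rmin_l x (cc a)). pose proof (Rmin_r x (cc a)).
  apply (taylor_lb (psi a) (fun s => ln (a*s) + 1) (fun s => /s) (Rmin x (cc a)) 1); auto.
  - intros s Hs. apply psi_derivs; lra.
  - lra.
  - lra.
  - apply psi_c; auto.
  - apply ln_acc; auto.
  - intros s Hs. rewrite <- Rinv_1. apply Rinv_le_contravar; lra.
Qed.

Lemma ig_cont t a z : /exp 1 < a -> 0 <= z -> continuous (ig t a) z.
Proof.
  intros Ha Hz. pose proof (a_pos a Ha).
  destruct Hz as [Hz|Hz].
  - apply cont_der_R. unfold ig, psi. auto_derive. nra.
  - subst z. apply continuity_pt_filterlim.
    set (g := fun y => exp (-(t*(y + cc a)))).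
    change (continuity_pt (comp g (fun x => x * ln (a*x))) 0).
    apply continuity_pt_comp. apply xln_cont0; auto.
    apply derivable_continuous_pt. apply ex_derive_Reals_0. unfold g. auto_derive. auto.
Qed.

Lemma ig_ex t a lo hi : /exp 1 < a -> 0 <= lo <= hi -> ex_RInt (ig t a) lo hi.
Proof.
  intros Ha Hl. apply ex_RInt_cont_R. intros z Hz. apply ig_cont; auto.
  rewrite Rmin_left in Hz; lra.
Qed.

Lemma tail_small b eps : 0 < b -> 0 < eps ->
  exists M, forall t, M < t -> sqrt t * exp (-(t*b)) < eps.
Proof.
  intros Hb He. exists (Rmax 1 (4/(b*b*eps))). intros t Ht.
  pose proof (Rmax_l 1 (4/(b*b*eps))). pose proof (Rmax_r 1 (4/(b*b*eps))).
  assert (Ht1 : 1 < t) by lra.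
  assert (Ht2 : 4/(b*b*eps) < t) by lra.
  assert (Hs : sqrt t <= t).
  { pose proof (sqrt_sqrt t ltac:(lra)). pose proof (sqrt_pos t).
    assert (1 <= sqrt t). { rewrite <- sqrt_1. apply sqrt_le_1_alt. lra. } nra. }
  assert (HE : (t*b/2)^2 <= exp (t*b)).
  { replace (t*b) with (t*b/2 + t*b/2) at 2 by field. rewrite exp_plus.
    pose proof (exp_ineq1_le (t*b/2)). assert (0 <= t*b/2) by nra. nra. }
  assert (Hq : t < eps * (t*b/2)^2).
  { apply Rmult_lt_compat_r with (r := b*b*eps) in Ht2. 2: { assert (0 < b*b) by nra. nra. }
    replace (4/(b*b*eps)*(b*b*eps)) with 4 in Ht2 by (field; split; lra). nra. }
  pose proof (exp_pos (t*b)).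
  rewrite exp_Ropp. apply Rmult_lt_reg_r with (exp (t*b)); auto.
  rewrite Rmult_assoc, Rinv_l by lra. nra.
Qed.

Lemma sandwich_ig a d t : /exp 1 < a -> 0 < d -> d < cc a -> cc a + d <= 1 -> 0 < t ->
  RInt (fun x => exp (-(t * (/(cc a - d)) * (x - cc a)^2/2))) (cc a - d) (cc a + d)
    <= RInt (ig t a) 0 1 /\
  RInt (ig t a) 0 1 <=
    RInt (fun x => exp (-(t * (/(cc a + d)) * (x - cc a)^2/2))) (cc a - d) (cc a + d)
    + exp (-(t * (d*d/2))).
Proof.
  intros Ha Hd Hdc Hd1 Ht. pose proof (a_pos a Ha). pose proof (cc_bounds a Ha).
  assert (E : RInt (ig t a) 0 1 = RInt (ig t a) 0 ((cc a)-d) + RInt (ig t a) ((cc a)-d) ((cc a)+d) + RInt (ig t a) ((cc a)+d) 1).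
  { rewrite RInt_Chasles_R, RInt_Chasles_R; auto; apply ig_ex; auto; lra. }
  assert (Exm : ex_RInt (fun x => exp (-(t * (/((cc a) - d)) * (x - (cc a))^2/2))) ((cc a)-d) ((cc a)+d)).
  { apply ex_RInt_cont_R; intros; apply cont_der_R; auto_derive; auto. }
  assert (Exp : ex_RInt (fun x => exp (-(t * (/((cc a) + d)) * (x - (cc a))^2/2))) ((cc a)-d) ((cc a)+d)).
  { apply ex_RInt_cont_R; intros; apply cont_der_R; auto_derive; auto. }
  assert (P1 : 0 <= RInt (ig t a) 0 ((cc a)-d)).
  { apply RInt_ge_0. lra. apply ig_ex; auto; lra. intros; apply Rlt_le, exp_pos. }
  assert (P3 : 0 <= RInt (ig t a) ((cc a)+d) 1).
  { apply RInt_ge_0. lra. apply ig_ex; auto; lra. intros; apply Rlt_le, exp_pos. }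
  assert (Mlo : RInt (fun x => exp (-(t * (/((cc a) - d)) * (x - (cc a))^2/2))) ((cc a)-d) ((cc a)+d) <= RInt (ig t a) ((cc a)-d) ((cc a)+d)).
  { apply RInt_le. lra. auto. apply ig_ex; auto; lra.
    intros x Hx. unfold ig. apply exp_le.
    assert (psi a x <= /((cc a) - d) * (x - (cc a))^2/2) by (apply psi_ub1; [exact Ha| |]; split; lra).
    assert (t * psi a x <= t * (/((cc a) - d) * (x - (cc a))^2/2)) by (apply Rmult_le_compat_l; lra).
    assert (t * (/((cc a) - d) * (x - (cc a))^2/2) = t * (/((cc a) - d)) * (x - (cc a))^2/2) by (field; lra). lra. }
  assert (Mhi : RInt (ig t a) ((cc a)-d) ((cc a)+d) <= RInt (fun x => exp (-(t * (/((cc a) + d)) * (x - (cc a))^2/2))) ((cc a)-d) ((cc a)+d)).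
  { apply RInt_le. lra. apply ig_ex; auto; lra. auto.
    intros x Hx. unfold ig. apply exp_le.
    assert (/((cc a) + d) * (x - (cc a))^2/2 <= psi a x) by (apply psi_lb1; [exact Ha| |]; split; lra).
    assert (t * (/((cc a) + d) * (x - (cc a))^2/2) <= t * psi a x) by (apply Rmult_le_compat_l; lra).
    assert (t * (/((cc a) + d) * (x - (cc a))^2/2) = t * (/((cc a) + d)) * (x - (cc a))^2/2) by (field; lra). lra. }
  assert (Tb : forall x, 0 < x <= 1 -> d <= Rabs (x - (cc a)) -> ig t a x <= exp (-(t*(d*d/2)))).
  { intros x Hx Hxd. unfold ig. apply exp_le.
    assert (1*(x-(cc a))^2/2 <= psi a x) by (apply psi_lb2; auto).
    assert (d*d <= (x-(cc a))^2).
    { destruct (Rle_or_lt 0 (x - cc a)). rewrite Rabs_pos_eq in Hxd by lra. nra. rewrite Rabs_left in Hxd by lra. nra. }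
    assert (d*d/2 <= psi a x) by lra.
    assert (t*(d*d/2) <= t*psi a x) by (apply Rmult_le_compat_l; lra). lra. }
  assert (T1 : RInt (ig t a) 0 ((cc a)-d) <= ((cc a)-d) * exp (-(t*(d*d/2)))).
  { replace (((cc a)-d) * exp (-(t*(d*d/2)))) with (RInt (fun _ => exp (-(t*(d*d/2)))) 0 ((cc a)-d))
      by (rewrite RInt_const_R; fixeq; ring).
    apply RInt_le. lra. apply ig_ex; auto; lra. apply ex_RInt_cont_R; intros; apply cont_der_R; auto_derive; auto.
    intros x Hx. apply Tb. lra. rewrite Rabs_left by lra. lra. }
  assert (T3 : RInt (ig t a) ((cc a)+d) 1 <= (1-((cc a)+d)) * exp (-(t*(d*d/2)))).
  { replace ((1-((cc a)+d)) * exp (-(t*(d*d/2)))) with (RInt (fun _ => exp (-(t*(d*d/2)))) ((cc a)+d) 1)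
      by (rewrite RInt_const_R; fixeq; ring).
    apply RInt_le. lra. apply ig_ex; auto; lra. apply ex_RInt_cont_R; intros; apply cont_der_R; auto_derive; auto.
    intros x Hx. apply Tb. lra. rewrite Rabs_right by lra. lra. }
  pose proof (exp_pos (-(t*(d*d/2)))).
  split; rewrite E.
  - lra.
  - assert (((cc a)-d) * exp (-(t*(d*d/2))) + (1-((cc a)+d)) * exp (-(t*(d*d/2))) <= exp (-(t*(d*d/2)))) by nra.
    lra.
Qed.


Lemma sqrt_close A h : 0 < A -> 0 <= h -> h <= A ->
  sqrt (A + h) - sqrt A <= h / sqrt A /\ sqrt A - sqrt (A - h) <= h / sqrt A.
Proof.
  intros HA Hh HhA.
  pose proof (sqrt_lt_R0 A HA) as HL.
  pose proof (sqrt_sqrt A ltac:(lra)) as EA.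
  pose proof (sqrt_sqrt (A+h) ltac:(lra)) as EP.
  pose proof (sqrt_sqrt (A-h) ltac:(lra)) as EM.
  pose proof (sqrt_pos (A+h)). pose proof (sqrt_pos (A-h)).
  split; apply Rmult_le_reg_r with (sqrt A); auto; unfold Rdiv;
    rewrite Rmult_assoc, Rinv_l by lra; rewrite Rmult_1_r.
  - assert (sqrt A <= sqrt (A+h)) by (apply sqrt_le_1_alt; lra). nra.
  - assert (sqrt (A-h) <= sqrt A) by (apply sqrt_le_1_alt; lra). nra.
Qed.

Lemma S_lim a : /exp 1 < a ->
  is_lim (fun t => sqrt t * RInt (ig t a) 0 1) p_infty (sqrt (2*PI*cc a)).
Proof.
  intros Ha. pose proof (a_pos a Ha). pose proof (cc_bounds a Ha). pose proof PI_RGT_0.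
  set (c := cc a) in *.
  set (L := sqrt (2*PI*c)).
  assert (HL : 0 < L) by (apply sqrt_lt_R0; nra).
  apply is_lim_spec. intros eps. pose proof (cond_pos eps) as He.
  set (d := Rmin (Rmin (c/2) ((1-c)/2)) (eps * L / (8*PI))).
  assert (Hd1 : d <= c/2) by (unfold d; pose proof (Rmin_l (Rmin (c/2) ((1-c)/2)) (eps * L / (8*PI))); pose proof (Rmin_l (c/2) ((1-c)/2)); lra).
  assert (Hd2 : d <= (1-c)/2) by (unfold d; pose proof (Rmin_l (Rmin (c/2) ((1-c)/2)) (eps * L / (8*PI))); pose proof (Rmin_r (c/2) ((1-c)/2)); lra).
  assert (Hd3 : d <= eps * L / (8*PI)) by (unfold d; apply Rmin_r).
  assert (Hd0 : 0 < d).
  { unfold d. apply Rmin_glb_lt. apply Rmin_glb_lt; lra.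
    apply Rdiv_lt_0_compat; nra. }
  destruct (sqrt_close (2*PI*c) (2*PI*d)) as [U1 U2]; try nra.
  assert (Hh : 2*PI*d / sqrt (2*PI*c) <= eps/4).
  { fold L. apply Rmult_le_reg_r with L; auto. unfold Rdiv. rewrite Rmult_assoc, Rinv_l by lra.
    apply Rmult_le_compat_l with (r := 8*PI) in Hd3; [|nra].
    replace (8*PI*(eps*L/(8*PI))) with (eps*L) in Hd3 by (field; lra). nra. }
  fold L in U1, U2, Hh.
  replace (2*PI*c + 2*PI*d) with (2*PI/(/(c+d))) in U1 by (field; lra).
  replace (2*PI*c - 2*PI*d) with (2*PI/(/(c-d))) in U2 by (field; lra).
  assert (Jp := lim_J (/(c+d)) d c ltac:(apply Rinv_0_lt_compat; lra) Hd0).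
  assert (Jm := lim_J (/(c-d)) d c ltac:(apply Rinv_0_lt_compat; lra) Hd0).
  apply is_lim_spec in Jp. apply is_lim_spec in Jm.
  assert (He4 : 0 < eps/4) by lra.
  destruct (Jp (mkposreal _ He4)) as [M1 HM1].
  destruct (Jm (mkposreal _ He4)) as [M2 HM2].
  destruct (tail_small (d*d/2) (eps/4)) as [M3 HM3]; try nra.
  exists (Rmax (Rmax M1 M2) (Rmax M3 0)). intros t Ht.
  pose proof (Rmax_l (Rmax M1 M2) (Rmax M3 0)). pose proof (Rmax_r (Rmax M1 M2) (Rmax M3 0)).
  pose proof (Rmax_l M1 M2). pose proof (Rmax_r M1 M2). pose proof (Rmax_l M3 0). pose proof (Rmax_r M3 0).
  specialize (HM1 t ltac:(lra)). specialize (HM2 t ltac:(lra)). specialize (HM3 t ltac:(lra)).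
  cbn [pos] in HM1, HM2.
  assert (Ht0 : 0 < t) by lra.
  assert (Hdc : d < c) by lra. assert (Hc1 : c + d <= 1) by lra.
  destruct (sandwich_ig a d t Ha Hd0 Hdc Hc1 Ht0) as [S1 S2].
  fold c in S1, S2.
  pose proof (sqrt_pos t) as Hst.
  apply Rmult_le_compat_l with (r := sqrt t) in S1; auto.
  apply Rmult_le_compat_l with (r := sqrt t) in S2; auto.
  rewrite Rmult_plus_distr_l in S2.
  apply Rabs_def2 in HM1. apply Rabs_def2 in HM2. destruct HM1, HM2.
  apply Rabs_def1; lra.
Qed.

Theorem mainTheorem2 (a : R) (ha : / exp 1 < a) :
  is_lim (fun t => f_ta t a / g_ta t a) p_infty 1.
Proof.
  pose proof (a_pos a ha). pose proof (cc_bounds a ha). pose proof PI_RGT_0.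
  set (L := sqrt (2*PI*cc a)).
  assert (HL : 0 < L) by (apply sqrt_lt_R0; nra).
  apply is_lim_ext_loc with (fun t => /L * (sqrt t * RInt (ig t a) 0 1)).
  - exists 0. intros t Ht.
    unfold f_ta, g_ta.
    rewrite (RInt_ext_R (fun x => integrand t a x) (fun x => exp (t * cc a) * ig t a x)).
    2: { intros x _. unfold integrand, ig, psi. rewrite <- exp_plus. f_equal. ring. }
    rewrite RInt_scal_R by (apply ig_ex; auto; lra).
    replace (t / (exp 1 * a)) with (t * cc a) by (unfold cc; field; split; [lra|pose proof e_pos; lra]).
    replace (2 * PI * t / (exp 1 * a)) with (t * (2*PI*cc a)) by (unfold cc; field; split; [lra|pose proof e_pos; lra]).
    rewrite sqrt_mult_alt by lra. fold L.
    pose proof (sqrt_sqrt t ltac:(lra)). pose proof (sqrt_lt_R0 t Ht). pose proof (exp_pos (t * cc a)).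
    set (I := RInt (ig t a) 0 1). fixeq.
    transitivity (sqrt t * sqrt t * (exp (t*cc a) * I) / (sqrt t * L * exp (t*cc a))).
    field. repeat split; lra. rewrite H2. reflexivity.
  - replace (Finite 1) with (Rbar_mult (/L) L).
    apply is_lim_scal_l. apply S_lim; auto.
    simpl. f_equal. field. lra.
Qed.
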